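(* Let $P$ be the program NQUEENS. Then $S^0\subseteq\mathcal{M}_P$; that is, NQUEENS is complete with respect to $S^0$. Consequently NQUEENS is also complete with respect to $S^0_{pqs}$ (i.e. $S^0_{pqs}\subseteq\mathcal{M}_P$).
   Context: Terms are built over a fixed alphabet containing the constant $0$, the unary symbol $s$, the list constant $[\,]$ and the binary list constructor $[\cdot|\cdot]$; $\mathcal{HU}$ is the set of ground terms and $\mathcal{HB}$ the set of ground atoms. A natural number $i$ is identified with the term $s^i(0)$. Prolog list notation is used: $[e_1,\dots,e_n|e]$ stands for $e$ when $n=0$, and a list of length $n$ is a term $[e_1,\dots,e_n]$. A term $e$ is the $k$-th member of a term $t$ ($k\ge 1$) if $t=[e_1,\dots,e_{k-1},e|e']$ for some terms $e_1,\dots,e_{k-1},e'$; $e$ is a member of $t$ if it is its $k$-th member for some $k$. A list of distinct members is a list whose elements are pairwise distinct. The program NQUEENS consists of the definite clauses (capitalized names are variables): (C1) $pqs(0,X_1,X_2,X_3)$. (C2) $pqs(s(I),Cs,Us,[X|Ds]) \gets pqs(I,Cs,[Y|Us],Ds),\ pq(s(I),Cs,Us,Ds)$. (C3) $pq(I,[I|X_1],[I|X_2],[I|X_3])$. (C4) $pq(I,[X_1|Cs],[X_2|Us],[X_3|Ds]) \gets pq(I,Cs,Us,Ds)$. $\mathcal{M}_P$ denotes the least Herbrand model of a program $P$. If a number $j$ is the $k$-th member of a list $cs$, the up-diagonal number of $j$ w.r.t. $i$ in $cs$ is $k+j-i$ and the down-diagonal number is $k+i-j$. A triple $(cs,us,ds)$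 of terms is correct up to $m$ w.r.t. $i$ when $0\le m\le i$ and: $cs$ is a list of distinct members and each $j\in\{1,\dots,m\}$ is a member of $cs$; the up-diagonal numbers of $1,\dots,m$ in $cs$ are pairwise distinct, and likewise the down-diagonal numbers; and for each $j\in\{1,\dots,m\}$, if the up-diagonal (resp. down-diagonal) number of $j$ w.r.t. $i$ in $cs$ is $l>0$, then the $l$-th member of $us$ (resp. $ds$) is $j$. Specifications: $S_{pq}=\{pq(i,[c_1,\dots,c_k,i|c],[u_1,\dots,u_k,i|u],[d_1,\dots,d_k,i|d])\in\mathcal{HB}\mid k\ge0\}$; $S^0_{pqs}=\{pqs(i,cs,us,[t|ds])\in\mathcal{HB}\mid i>0$ a natural number and $(cs,us,ds)$ is correct up to $i$ w.r.t. $i\}$; $S^0=S_{pq}\cup S^0_{pqs}\cup\{pqs(0,cs,us,ds)\mid cs,us,ds\in\mathcal{HU}\}$. *)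

(* Defs.v *)
From Stdlib Require Import List ZArith Lia.
Import ListNotations.

Inductive term : Type :=
| T0 : term
| Ts : term -> term
| Tnil : term
| Tcons : term -> term -> term.

Inductive atom : Type :=
| Apqs : term -> term -> term -> term -> atom
| Apq  : term -> term -> term -> term -> atom.

Fixpoint num (i : nat) : term :=
  match i with O => T0 | S n => Ts (num n) end.

(* Prolog list notation [e1,...,en|e] *)
Fixpoint lst (l : list term) (e : term) : term :=
  match l with [] => e | x :: r => Tcons x (lst r e) end.

(* A Herbrand interpretation is a set of ground atoms.  It is a model of
   NQUEENS iff it is closed under every ground instance of (C1)-(C4). *)
Definition herbrand_model_NQUEENS (I : atom -> Prop) : Prop :=
  (forall x1 x2 x3, I (Apqs T0 x1 x2 x3)) /\
  (forall i cs us x ds y,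
              I (Apqs i cs (Tcons y us) ds) -> I (Apq (Ts i) cs us ds) ->
              I (Apqs (Ts i) cs us (Tcons x ds))) /\
  (forall i x1 x2 x3, I (Apq i (Tcons i x1) (Tcons i x2) (Tcons i x3))) /\
  (forall i x1 cs x2 us x3 ds,
              I (Apq i cs us ds) ->
              I (Apq i (Tcons x1 cs) (Tcons x2 us) (Tcons x3 ds))).

Definition M_NQUEENS (a : atom) : Prop :=
  forall I, herbrand_model_NQUEENS I -> I a.

Definition kth_member (t : term) (k : nat) (e : term) : Prop :=
  1 <= k /\ exists (l : list term) (e' : term),
    length l = k - 1 /\ t = lst l (Tcons e e').

Definition member (e t : term) : Prop := exists k, kth_member t k e.

Definition distinct_list (t : term) : Prop :=
  exists l : list term, t = lst l Tnil /\ NoDup l.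

Definition updiag (k j i : nat) : Z := (Z.of_nat k + Z.of_nat j - Z.of_nat i)%Z.
Definition downdiag (k j i : nat) : Z := (Z.of_nat k + Z.of_nat i - Z.of_nat j)%Z.

Definition correct_up_to (cs us ds : term) (m i : nat) : Prop :=
  m <= i /\
  distinct_list cs /\
  (forall j, 1 <= j <= m -> member (num j) cs) /\
  (forall j1 j2 k1 k2, 1 <= j1 <= m -> 1 <= j2 <= m -> j1 <> j2 ->
     kth_member cs k1 (num j1) -> kth_member cs k2 (num j2) ->
     updiag k1 j1 i <> updiag k2 j2 i) /\
  (forall j1 j2 k1 k2, 1 <= j1 <= m -> 1 <= j2 <= m -> j1 <> j2 ->
     kth_member cs k1 (num j1) -> kth_member cs k2 (num j2) ->
     downdiag k1 j1 i <> downdiag k2 j2 i) /\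
  (forall j k (l : nat), 1 <= j <= m -> kth_member cs k (num j) ->
     Z.of_nat l = updiag k j i -> 0 < l -> kth_member us l (num j)) /\
  (forall j k (l : nat), 1 <= j <= m -> kth_member cs k (num j) ->
     Z.of_nat l = downdiag k j i -> 0 < l -> kth_member ds l (num j)).

Definition S_pq (a : atom) : Prop :=
  exists i (cl ul dl : list term) c u d,
    length cl = length ul /\ length ul = length dl /\
    a = Apq i (lst cl (Tcons i c)) (lst ul (Tcons i u)) (lst dl (Tcons i d)).

Definition S0_pqs (a : atom) : Prop :=
  exists (i : nat) cs us t ds,
    0 < i /\ correct_up_to cs us ds i i /\ a = Apqs (num i) cs us (Tcons t ds).

Definition S0 (a : atom) : Prop :=
  S_pq a \/ S0_pqs a \/ (exists cs us ds, a = Apqs T0 cs us ds).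

(* Main.v *)
Require Import Defs.
From Stdlib Require Import List ZArith Lia Classical.
Import ListNotations.

Lemma km_S_intro y t l e: kth_member t l e -> kth_member (Tcons y t) (S l) e.
Proof. intros [Hl [L [e' [HL Ht]]]]. split. lia. exists (y::L), e'. split. simpl; lia. simpl; now rewrite Ht. Qed.

Lemma km_S_elim y t l e: 1 <= l -> kth_member (Tcons y t) (S l) e -> kth_member t l e.
Proof. intros Hl [_ [L [e' [HL Ht]]]]. destruct L as [|a L]; simpl in HL. lia.
  simpl in Ht. injection Ht as _ Ht. split; auto. exists L, e'. split. lia. auto. Qed.

Lemma km_1 y t : kth_member (Tcons y t) 1 y.
Proof. split; auto. exists [], t. auto. Qed.

Lemma km_cons t k e: kth_member t k e -> exists a b, t = Tcons a b.
Proof. intros [_ [L [e' [_ Ht]]]]. destruct L; simpl in Ht; eauto. Qed.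

Lemma pq_lists I (H: herbrand_model_NQUEENS I) i : forall cl ul dl c u d,
  length cl = length ul -> length ul = length dl ->
  I (Apq i (lst cl (Tcons i c)) (lst ul (Tcons i u)) (lst dl (Tcons i d))).
Proof.
  destruct H as [C1 [C2 [C3 C4]]].
  induction cl; destruct ul, dl; simpl; intros; try discriminate.
  apply C3. apply C4; apply IHcl; simpl in *; lia.
Qed.

Lemma pqs_main I (H: herbrand_model_NQUEENS I) : forall i cs us ds t,
  correct_up_to cs us ds i i -> I (Apqs (num i) cs us (Tcons t ds)).
Proof.
  pose proof H as HH. destruct H as [C1 [C2 [C3 C4]]].
  induction i. intros; apply C1.
  intros cs us ds t Hc.
  destruct Hc as (Hm & Hd & Hmem & Hup & Hdn & Hus & Hds).
  assert (Hpq : I (Apq (num (S i)) cs us ds)).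
  { destruct (Hmem (S i)) as [k Hk]; [lia|].
    assert (Hk1 : 1 <= k) by (destruct Hk; auto).
    assert (Hku := Hus (S i) k k ltac:(lia) Hk ltac:(unfold updiag; lia) ltac:(lia)).
    assert (Hkd := Hds (S i) k k ltac:(lia) Hk ltac:(unfold downdiag; lia) ltac:(lia)).
    destruct Hk as [_ [L1 [c [HL1 ->]]]].
    destruct Hku as [_ [L2 [u [HL2 ->]]]].
    destruct Hkd as [_ [L3 [d [HL3 ->]]]].
    apply pq_lists; auto; lia. }
  simpl (num (S i)) in *.
  destruct (Nat.eq_dec i 0) as [->|Hi0].
  { apply C2 with (y := T0); [apply C1 | exact Hpq]. }
  assert (Hdc : exists a b, ds = Tcons a b).
  { destruct (Hmem 1) as [k Hk]; [lia|].
    assert (Hk1 : 1 <= k) by (destruct Hk; auto).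
    eapply km_cons. apply (Hds 1 k (k + i)); auto; try lia; unfold downdiag; lia. }
  destruct Hdc as [t2 [ds2 ->]].
  assert (Hy : exists y, forall j k, 1 <= j <= i -> kth_member cs k (num j) ->
              updiag k j (S i) = 0%Z -> num j = y).
  { destruct (classic (exists j k, 1 <= j <= i /\ kth_member cs k (num j) /\
                updiag k j (S i) = 0%Z)) as [[j0 [k0 [Hj0 [Hk0 Hu0]]]]|Hn].
    - exists (num j0). intros j k Hj Hk Hu.
      destruct (Nat.eq_dec j j0) as [->|Hne]; auto.
      exfalso. apply (Hup j j0 k k0); try lia; auto; congruence.
    - exists T0. intros j k Hj Hk Hu. exfalso. apply Hn; eauto. }
  destruct Hy as [y Hy].
  apply C2 with (y := y); [| exact Hpq].
  apply IHi.
  split. lia. split. auto. split. intros; apply Hmem; lia.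
  split. { intros j1 j2 k1 k2 ? ? ? ? ?.
    specialize (Hup j1 j2 k1 k2 ltac:(lia) ltac:(lia) ltac:(auto) ltac:(auto) ltac:(auto)).
    unfold updiag in *; lia. }
  split. { intros j1 j2 k1 k2 ? ? ? ? ?.
    specialize (Hdn j1 j2 k1 k2 ltac:(lia) ltac:(lia) ltac:(auto) ltac:(auto) ltac:(auto)).
    unfold downdiag in *; lia. }
  split.
  { intros j k l Hj Hk Hl Hl0. destruct l as [|l]; [lia|].
    destruct (Nat.eq_dec l 0) as [->|Hl1].
    - rewrite (Hy j k) by (auto; unfold updiag in *; lia). apply km_1.
    - apply km_S_intro. apply (Hus j k l); auto; try lia. unfold updiag in *; lia. }
  { intros j k l Hj Hk Hl Hl0.
    assert (Hx : kth_member (Tcons t2 ds2) (S l) (num j)).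
    { apply (Hds j k (S l)); auto; try lia. unfold downdiag in *; lia. }
    apply km_S_elim in Hx; auto. }
Qed.

Theorem mainTheorem5 :
  (forall a : atom, S0 a -> M_NQUEENS a) /\
  (forall a : atom, S0_pqs a -> M_NQUEENS a).
Proof.
  assert (Hs : forall a, S0_pqs a -> M_NQUEENS a).
  { intros a (i & cs & us & t & ds & Hi & Hc & ->) I HI. apply pqs_main; auto. }
  split; auto.
  intros a [Hpq|[Hq|H0]]; auto.
  - destruct Hpq as (i & cl & ul & dl & c & u & d & H1 & H2 & ->).
    intros I HI. apply pq_lists; auto.
  - destruct H0 as (cs & us & ds & ->). intros I [C1 _]. apply C1.
Qed.
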